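(* Let $q$ be a prime power and $1\le s<t$ integers. If there exists a linear OA$(s,t,q)$, then there exist a linear AOA$(s,t,t,q)$ and a linear AOA$(t-s,t,t,q)$.
   Context: An orthogonal array OA$(t,k,v)$ (with $1\le t\le k$) is a $v^t\times k$ array with entries from a set $X$ of size $v$ such that, for every choice of $t$ of its columns, each $t$-tuple in $X^t$ appears exactly once as a row of the corresponding $v^t\times t$ subarray. For integers $1\le s\le t\le k$, an augmented orthogonal array AOA$(s,t,k,v)$ is a $v^t\times(k+1)$ array $A$ such that: (1) the first $k$ columns of $A$ form an OA$(t,k,v)$ on a symbol set $X$ of size $v$; (2) the last column of $A$ has entries from a set $Y$ of size $v^{t-s}$; (3) for any choice of $s$ of the first $k$ columns, these $s$ columns together with the last column contain every $(s+1)$-tuple of $X^s\times Y$ exactly once as a row. For a prime power $q$, an OA$(t,k,q)$ over $\mathbb{F}_q$ is linear if its set of rows is a $t$-dimensional $\mathbb{F}_q$-subspace of $\mathbb{F}_q^k$; an AOA$(s,t,k,q)$ is linear if $X=\mathbb{F}_q$, $Y=\mathbb{F}_q^{t-s}$, and its set of rows, regarded as vectors in $\mathbb{F}_q^{k}\times\mathbb{F}_q^{t-s}=\mathbb{F}_q^{k+t-s}$, is an $\mathbb{F}_q$-linear subspace. *)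

(* Defs.v *)
From HB Require Import structures.
From mathcomp Require Import all_boot all_order all_algebra.
Unset Implicit Arguments. Unset Strict Implicit. Unset Printing Implicit Defensive.
Import GRing.Theory.

(* An OA(t,k,v) on the symbol set X (v = #|X|): a v^t x k array A
   (rows indexed by 'I_(#|X|^t)) such that for every choice of t columns
   (an injective c : 'I_t -> 'I_k) every t-tuple x appears exactly once. *)
Definition is_OA (X : finType) (t k : nat) (A : 'M[X]_(#|X| ^ t, k)) : Prop :=
  (0 < t <= k)%N /\
  forall c : 'I_t -> 'I_k, injective c ->
  forall x : {ffun 'I_t -> X},
    #|[set i : 'I_(#|X| ^ t) | [forall j, A i (c j) == x j]]| = 1%N.

(* AOA(s,t,k,v): first k columns A (over X), last column B (over Y). *)
Definition is_AOA (X Y : finType) (s t k : nat)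
    (A : 'M[X]_(#|X| ^ t, k)) (B : 'I_(#|X| ^ t) -> Y) : Prop :=
  (0 < s <= t)%N /\
  is_OA X t k A /\
  #|Y| = (#|X| ^ (t - s))%N /\
  forall c : 'I_s -> 'I_k, injective c ->
  forall (x : {ffun 'I_s -> X}) (y : Y),
    #|[set i : 'I_(#|X| ^ t) | [forall j, A i (c j) == x j] && (B i == y)]| = 1%N.

(* Linear OA(t,k,q) over F = F_q: its set of rows is a t-dimensional
   subspace of F^k (subspaces represented as row spaces of matrices). *)
Definition is_linear_OA (F : finFieldType) (t k : nat)
    (A : 'M[F]_(#|F| ^ t, k)) : Prop :=
  is_OA F t k A /\
  exists U : 'M[F]_k, \rank U = t /\
    forall v : 'rV[F]_k, (exists i, v = row i A) <-> (v <= U)%MS.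

(* Linear AOA(s,t,k,q): X = F, Y = F^(t-s), and the set of rows, viewed in
   F^k x F^(t-s) = F^(k+t-s), is an F-linear subspace. *)
Definition is_linear_AOA (F : finFieldType) (s t k : nat)
    (A : 'M[F]_(#|F| ^ t, k)) (B : 'I_(#|F| ^ t) -> 'rV[F]_(t - s)) : Prop :=
  is_AOA F _ s t k A B /\
  exists U : 'M[F]_(k + (t - s)),
    forall v : 'rV[F]_(k + (t - s)),
      (exists i, v = row_mx (row i A) (B i)) <-> (v <= U)%MS.

(* Main.v *)
Require Import Defs.
From HB Require Import structures.
From mathcomp Require Import all_boot all_order all_algebra.
Import GRing.Theory.
Local Open Scope ring_scope.
Set Implicit Arguments.

Lemma card_rV_eq (F : finFieldType) t : (#|F| ^ t)%N = #|{: 'rV[F]_t}|.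
Proof. by rewrite card_mx mul1n. Qed.

Definition vecF (F : finFieldType) t (i : 'I_(#|F| ^ t)) : 'rV[F]_t :=
  enum_val (cast_ord (card_rV_eq F t) i).

Arguments vecF {F t}.
Lemma vecF_inj (F : finFieldType) t : injective (@vecF F t).
Proof. by move=> i j /enum_val_inj /cast_ord_inj. Qed.

Lemma vecF_surj (F : finFieldType) t (v : 'rV[F]_t) : exists i, v = vecF i.
Proof.
exists (cast_ord (esym (card_rV_eq F t)) (enum_rank v)).
by rewrite /vecF cast_ordKV enum_rankK.
Qed.

Definition Avec (F : finFieldType) t : 'M[F]_(#|F| ^ t, t) := \matrix_i vecF i.

Lemma Avec_row (F : finFieldType) t i : row i (@Avec F t) = vecF i.
Proof. by rewrite rowK. Qed.

Lemma Avec_E (F : finFieldType) t i j : (@Avec F t) i j = vecF i 0 j.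
Proof. by rewrite /Avec !mxE. Qed.

Lemma key (F : finFieldType) (t s' m : nat) (M : 'M[F]_(t, m)) :
  (s' + m = t)%N ->
  forall c : 'I_s' -> 'I_t, injective c ->
  (forall v : 'rV[F]_t, (forall j, v 0 (c j) = 0) -> v *m M = 0 -> v = 0) ->
  forall (x : {ffun 'I_s' -> F}) (y : 'rV[F]_m),
  #|[set i : 'I_(#|F| ^ t) | [forall j, Avec F t i (c j) == x j]
        && (row i (Avec F t) *m M == y)]| = 1%N.
Proof.
move=> Hsm c injc Hker x y.
pose Phi := fun i : 'I_(#|F| ^ t) =>
  ([ffun j => vecF i 0 (c j)], vecF i *m M).
have injPhi : injective Phi.
  move=> i i' [] /ffunP E1 E2; apply: vecF_inj; apply/eqP; rewrite -subr_eq0.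
  apply/eqP; apply: Hker.
    by move=> j; rewrite !mxE; move: (E1 j); rewrite !ffunE => ->; rewrite subrr.
  by rewrite mulmxBl E2 subrr.
have : (x, y) \in codom Phi.
  apply: inj_card_onto => //.
  rewrite card_prod card_ffun !card_ord card_mx mul1n -expnD.
  by rewrite Hsm.
move/codomP=> [i0 Hi0].
apply/eqP/cards1P; exists i0; apply/setP=> i; rewrite !inE.
apply/idP/idP.
  move=> /andP[/forallP H1 /eqP H2]; apply/eqP/injPhi; rewrite -Hi0 /Phi.
  congr pair; last by rewrite -Avec_row.
  by apply/ffunP=> j; rewrite ffunE; move/eqP: (H1 j); rewrite Avec_E.
move/eqP=> ->; move: Hi0; rewrite /Phi => -[-> ->].
rewrite Avec_row eqxx andbT; apply/forallP=> j.
by rewrite Avec_E ffunE.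
Qed.

Lemma build (F : finFieldType) (t s' : nat) (M : 'M[F]_(t, t - s')) :
  (0 < s' <= t)%N ->
  (forall c : 'I_s' -> 'I_t, injective c ->
   forall v : 'rV[F]_t, (forall j, v 0 (c j) = 0) -> v *m M = 0 -> v = 0) ->
  exists (A : 'M[F]_(#|F| ^ t, t)) (B : 'I_(#|F| ^ t) -> 'rV[F]_(t - s')),
    is_linear_AOA F s' t t A B.
Proof.
move=> /andP[s0 st] Hker.
exists (Avec F t), (fun i => row i (Avec F t) *m M).
split.
  split; first by rewrite s0 st.
  split.
    split; first by rewrite (leq_trans s0 st) leqnn.
    move=> c injc x.
    have := @key F t t 0 0 (addn0 t) c injc _ x 0.
    have -> : [set i : 'I_(#|F| ^ t) | [forall j, Avec F t i (c j) == x j]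
        && (row i (Avec F t) *m (0 : 'M[F]_(t,0)) == 0)] =
      [set i | [forall j, Avec F t i (c j) == x j]].
      by apply/setP=> i; rewrite !inE mulmx0 eqxx andbT.
    apply=> v Hv _; apply/rowP=> k.
    have : k \in codom c by apply: (inj_card_onto injc).
    by move/codomP=> [j ->]; rewrite Hv mxE.
  split; first by rewrite card_mx mul1n.
  move=> c injc x y; apply: key => //; first by rewrite subnKC.
  exact: Hker.
exists <<row_mx 1%:M M>>%MS => v; rewrite genmxE; split.
  move=> [i ->]; rewrite -[X in row_mx X _]mulmx1 -mul_mx_row.
  exact: submxMl.
move/submxP=> [D ->]; have [i ->] := @vecF_surj F t D.
by exists i; rewrite mul_mx_row mulmx1 Avec_row.
Qed.

Theorem theorem3p4 (F : finFieldType) (s t : nat) :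
  (1 <= s)%N -> (s < t)%N ->
  (exists A : 'M[F]_(#|F| ^ s, t), is_linear_OA F s t A) ->
  (exists (A : 'M[F]_(#|F| ^ t, t)) (B : 'I_(#|F| ^ t) -> 'rV[F]_(t - s)),
      is_linear_AOA F s t t A B) /\
  (exists (A : 'M[F]_(#|F| ^ t, t)) (B : 'I_(#|F| ^ t) -> 'rV[F]_(t - (t - s))),
      is_linear_AOA F (t - s) t t A B).
Proof.
move=> s1 st [A0 [[_ HOA] [U [rkU HU]]]].
split.
  have [M HM] : exists M : 'M[F]_(t, t - s),
      forall v : 'rV[F]_t, v *m M = 0 -> (v <= U)%MS.
    have : \rank (cokermx U) = (t - s)%N by rewrite mxrank_coker rkU.
    move: (t - s)%N => n E; case: n / E.
    exists (col_base (cokermx U)) => v Hv.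
    by rewrite submxE -(mulmx_base (cokermx U)) mulmxA Hv mul0mx.
  apply: (@build F t s M); first by rewrite s1 ltnW.
  move=> c injc v Hv HvM.
  have [i Ei] := (HU v).2 (HM v HvM).
  have [i' Ei'] := (HU 0).2 (sub0mx _ _).
  have := HOA c injc [ffun => 0].
  move/eqP/cards1P=> [i0 Hi0].
  have Hin : forall k, (forall j, A0 k (c j) = 0) -> k = i0.
    move=> k Hk; apply/set1P; rewrite -Hi0 inE; apply/forallP=> j.
    by rewrite ffunE Hk.
  have E1 : i = i0.
    by apply: Hin => j; rewrite -(Hv j) Ei mxE.
  have E2 : i' = i0.
    apply: Hin => j.
    have := congr1 (fun r : 'rV[F]_t => r 0 (c j)) Ei'.
    by rewrite /= !mxE => ->.
  rewrite Ei E1 -E2 -Ei'.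
  done.
have [M HM] : exists M : 'M[F]_(t, t - (t - s)),
    forall v : 'rV[F]_t, v *m M = 0 -> forall w : 'rV[F]_t, (w <= U)%MS -> w *m v^T = 0.
  have : \rank U = (t - (t - s))%N by rewrite rkU subKn // ltnW.
  move: (t - (t - s))%N => n E; case: n / E.
  exists (row_base U)^T => v Hv w.
  rewrite -(eq_row_base U) => /submxP[D ->].
  by rewrite -mulmxA -[_ *m v^T]trmxK trmx_mul trmxK Hv trmx0 mulmx0.
apply: (@build F t (t - s) M); first by rewrite subn_gt0 st leq_subr.
move=> c injc v Hv HvM; apply/rowP=> k; rewrite mxE.
pose Im := [set c j | j in 'I_(t - s)].
have [kIm | kIm] := boolP (k \in Im).
  by move/imsetP: kIm => [j _ ->]; rewrite Hv.
have cardD : s = #|~: Im|.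
  have := cardsC Im; rewrite card_imset // !card_ord => E.
  by apply/eqP; rewrite -(eqn_add2l (t - s)) E subnK // ltnW.
pose d := fun j : 'I_s => enum_val (cast_ord cardD j).
have injd : injective d by move=> j j' /enum_val_inj /cast_ord_inj.
have := HOA d injd [ffun j => (d j == k)%:R].
move/eqP/cards1P=> [i0 Hi0].
have Hi : forall j, A0 i0 (d j) = (d j == k)%:R.
  have : i0 \in [set i0] by rewrite inE.
  by rewrite -Hi0 inE => /forallP H j; move/eqP: (H j); rewrite ffunE.
have Hw : (row i0 A0 <= U)%MS by apply/(HU _).1; exists i0.
have := HM v HvM _ Hw.
move/matrixP/(_ 0 0); rewrite !mxE => <-.
rewrite (bigD1 k) //= big1 ?addr0.
  have kD : k \in ~: Im by rewrite inE.
  have -> : k = d (cast_ord (esym cardD) (enum_rank_in kD k)).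
    by rewrite /d cast_ordKV enum_rankK_in.
  rewrite !mxE Hi /d cast_ordKV enum_rankK_in // eqxx mul1r. done.
move=> l lk; rewrite !mxE.
have [lIm | lIm] := boolP (l \in Im).
  by move/imsetP: lIm => [j _ ->]; rewrite Hv mulr0.
have lD : l \in ~: Im by rewrite inE.
have -> : l = d (cast_ord (esym cardD) (enum_rank_in lD l)).
  by rewrite /d cast_ordKV enum_rankK_in.
rewrite Hi /d cast_ordKV enum_rankK_in // (negbTE lk) mul0r //.
Qed.
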